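(* Let $f:\mathbb{R}^n\times\mathbb{R}^m\to\mathbb{R}^n$ be a polynomial map and let $\boldsymbol\psi:\mathbb{R}^n\to\mathbb{R}^m$ be a function whose graph admits the representation \[ \{(x,\boldsymbol\psi(x)) : x\in\mathbb{R}^n\} = \{(x,u)\in\mathbb{R}^n\times\mathbb{R}^m \mid \exists\,\lambda\in\mathbb{R}^{n_\lambda}\ \text{s.t.}\ g(x,u,\lambda)\ge 0,\ h(x,u,\lambda)=0\} \] for some vector-valued polynomial maps $g,h$ (inequalities componentwise). Consider the closed-loop system $x_{k+1} = f(x_k,\boldsymbol\psi(x_k))$. Let \[ \mathbf{K} = \{(x,u,\lambda,x^+,u^+,\lambda^+) \mid x^+ = f(x,u),\ g(x,u,\lambda)\ge 0,\ h(x,u,\lambda)=0,\ g(x^+,u^+,\lambda^+)\ge 0,\ h(x^+,u^+,\lambda^+)=0\}. \] Suppose a continuous function $V:\mathbb{R}^n\times\mathbb{R}^m\times\mathbb{R}^{n_\lambda}\to\mathbb{R}$ satisfies, for all $(x,u,\lambda,x^+,u^+,\lambda^+)\in\mathbf{K}$, \[ V(x^+,u^+,\lambda^+) - V(x,u,\lambda) \le -\|x\|_2^2, \qquad V(x,u,\lambda)\ge 0. \] Then: (1) the closed-loop system is globally attractive, i.e., $x_k\to 0$ for every initial condition $x_0$; (2) if in addition the function $x\mapsto \inf\{\|u\|_2+\|\lambda\|_2 \mid g(x,u,\lambda)\ge 0,\ h(x,u,\lambda)=0\}$ is bounded on some neighborhood of the origin, or $V$ does not depend on $(u,\lambda)$,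 then the closed-loop system is globally asymptotically stable.
   Context: The closed-loop system $x^+=f(x,\boldsymbol\psi(x))$ is called globally asymptotically stable if (i) for all initial conditions $x_0$, $\lim_{k\to\infty}x_k = 0$ (global attractivity), and (ii) for every $\epsilon>0$ there exists $\delta>0$ such that $\|x_0\|_2\le\delta$ implies $\|x_k\|_2\le\epsilon$ for all $k$ (Lyapunov stability). *)

(* Defs.v *)
From HB Require Import structures.
From mathcomp Require Import all_boot all_order all_algebra.
From mathcomp Require Import all_classical all_reals all_analysis.
Set Implicit Arguments. Unset Strict Implicit. Unset Printing Implicit Defensive.
Import Order.TTheory GRing.Theory Num.Theory.
Import numFieldNormedType.Exports.
Local Open Scope classical_set_scope.
Local Open Scope ring_scope.

Section Defs.
Variable R : realType.

Inductive poly_fun (k : nat) : ('rV[R]_k -> R) -> Prop :=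
| poly_const (a : R) : poly_fun (fun _ => a)
| poly_coord (i : 'I_k) : poly_fun (fun v => v ord0 i)
| poly_add p q : poly_fun p -> poly_fun q -> poly_fun (fun v => p v + q v)
| poly_mul p q : poly_fun p -> poly_fun q -> poly_fun (fun v => p v * q v).

Definition poly_map (k l : nat) (F : 'rV[R]_k -> 'rV[R]_l) : Prop :=
  forall j : 'I_l, poly_fun (fun v => F v ord0 j).

(* Polynomial maps of two / three vector arguments (jointly polynomial in
   the concatenated variables). *)
Definition poly_map2 (n m l : nat) (F : 'rV[R]_n -> 'rV[R]_m -> 'rV[R]_l) : Prop :=
  poly_map (fun z : 'rV[R]_(n + m) => F (lsubmx z) (rsubmx z)).

Definition poly_map3 (n m p l : nat)
  (F : 'rV[R]_n -> 'rV[R]_m -> 'rV[R]_p -> 'rV[R]_l) : Prop :=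
  poly_map (fun z : 'rV[R]_(n + m + p) =>
     F (lsubmx (lsubmx z)) (rsubmx (lsubmx z)) (rsubmx z)).

Definition norm2 (k : nat) (x : 'rV[R]_k) : R :=
  Num.sqrt (\sum_(i < k) (x ord0 i) ^+ 2).

Definition vnonneg (k : nat) (v : 'rV[R]_k) : Prop := forall i, 0 <= v ord0 i.

Definition feasible (n m nl pg ph : nat)
  (g : 'rV[R]_n -> 'rV[R]_m -> 'rV[R]_nl -> 'rV[R]_pg)
  (h : 'rV[R]_n -> 'rV[R]_m -> 'rV[R]_nl -> 'rV[R]_ph)
  (x : 'rV[R]_n) (u : 'rV[R]_m) (lam : 'rV[R]_nl) : Prop :=
  vnonneg (g x u lam) /\ h x u lam = 0.

Definition traj (n m : nat) (f : 'rV[R]_n -> 'rV[R]_m -> 'rV[R]_n)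
  (psi : 'rV[R]_n -> 'rV[R]_m) (x0 : 'rV[R]_n) (k : nat) : 'rV[R]_n :=
  iter k (fun x => f x (psi x)) x0.

Definition globally_attractive (n m : nat) (f : 'rV[R]_n -> 'rV[R]_m -> 'rV[R]_n)
  (psi : 'rV[R]_n -> 'rV[R]_m) : Prop :=
  forall x0 : 'rV[R]_n, traj f psi x0 @ \oo --> (0 : 'rV[R]_n).

Definition lyapunov_stable (n m : nat) (f : 'rV[R]_n -> 'rV[R]_m -> 'rV[R]_n)
  (psi : 'rV[R]_n -> 'rV[R]_m) : Prop :=
  forall eps : R, 0 < eps -> exists2 delta : R, 0 < delta &
    forall x0 : 'rV[R]_n, norm2 x0 <= delta -> forall k, norm2 (traj f psi x0 k) <= eps.

Definition GAS (n m : nat) (f : 'rV[R]_n -> 'rV[R]_m -> 'rV[R]_n)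
  (psi : 'rV[R]_n -> 'rV[R]_m) : Prop :=
  globally_attractive f psi /\ lyapunov_stable f psi.

Definition min_cost (n m nl pg ph : nat)
  (g : 'rV[R]_n -> 'rV[R]_m -> 'rV[R]_nl -> 'rV[R]_pg)
  (h : 'rV[R]_n -> 'rV[R]_m -> 'rV[R]_nl -> 'rV[R]_ph) (x : 'rV[R]_n) : R :=
  inf [set c : R | exists u lam, feasible g h x u lam /\ c = norm2 u + norm2 lam].

End Defs.

(* Main.v *)
Require Import Defs.
From HB Require Import structures.
From mathcomp Require Import all_boot all_order all_algebra.
From mathcomp Require Import all_classical all_reals all_analysis.
Import Order.TTheory GRing.Theory Num.Theory.
Import numFieldNormedType.Exports.
Local Open Scope classical_set_scope.
Local Open Scope ring_scope.

From mathcomp Require Import lra.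
Set Implicit Arguments. Unset Strict Implicit.

Section S.
Variable R : realType.
Lemma norm2_ge0 k (v : 'rV[R]_k) : 0 <= norm2 v.
Proof. exact: sqrtr_ge0. Qed.

Lemma norm2_sqr k (v : 'rV[R]_k) : norm2 v ^+ 2 = \sum_(i < k) (v ord0 i) ^+ 2.
Proof. by rewrite /norm2 sqr_sqrtr // sumr_ge0 // => i _; rewrite sqr_ge0. Qed.

Lemma coord_le_norm2 k (v : 'rV[R]_k) i : `|v ord0 i| <= norm2 v.
Proof.
rewrite -ler_sqr ?nnegrE ?normr_ge0 ?norm2_ge0 //.
rewrite norm2_sqr real_normK ?num_real // (bigD1 i) //= lerDl.
by rewrite sumr_ge0 // => j _; rewrite sqr_ge0.
Qed.

Lemma mxnorm_le_norm2 k (v : 'rV[R]_k) : `|v| <= norm2 v.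
Proof.
have -> : `|v| = mx_norm v by [].
rewrite mx_normrE.
apply: bigmax_le; first exact: norm2_ge0.
move=> [i j] _ /=; rewrite (ord1 i); exact: coord_le_norm2.
Qed.

Lemma coord_le_mxnorm k (v : 'rV[R]_k) i : `|v ord0 i| <= `|v|.
Proof.
have -> : `|v| = mx_norm v by [].
rewrite mx_normrE.
by apply/bigmax_geP; right; exists (ord0, i).
Qed.

Lemma fst_cont (U V : topologicalType) : continuous (@fst U V).
Proof. by move=> [a b]; apply: cvg_fst. Qed.
Lemma snd_cont (U V : topologicalType) : continuous (@snd U V).
Proof. by move=> [a b]; apply: cvg_snd. Qed.
Variables n m nl : nat.
Definition T := ('rV[R]_n * 'rV[R]_m * 'rV[R]_nl)%type.
Lemma c1 : continuous (fun w : T => w.1.1).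
Proof. move=> w.
have h1 := @fst_cont ('rV[R]_n * 'rV[R]_m)%type 'rV[R]_nl w.
have h2 := @fst_cont 'rV[R]_n 'rV[R]_m w.1.
exact: (continuous_comp h1 h2). Qed.
Lemma c1' : continuous (fun w : T => w.1.2).
Proof. move=> w.
have h1 := @fst_cont ('rV[R]_n * 'rV[R]_m)%type 'rV[R]_nl w.
have h2 := @snd_cont 'rV[R]_n 'rV[R]_m w.1.
exact: (continuous_comp h1 h2). Qed.
Lemma c11 j : continuous (fun w : T => w.1.1 ord0 j).
Proof. move=> w.
have h1 : {for w, continuous (fun w : T => w.1.1)} by apply: c1.
have h2 := @coord_continuous R 1 n ord0 j w.1.1.
exact: (continuous_comp h1 h2). Qed.
Lemma c12 j : continuous (fun w : T => w.1.2 ord0 j).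
Proof. move=> w.
have h1 : {for w, continuous (fun w : T => w.1.2)} by apply: c1'.
have h2 := @coord_continuous R 1 m ord0 j w.1.2.
exact: (continuous_comp h1 h2). Qed.
Lemma c2 j : continuous (fun w : T => w.2 ord0 j).
Proof. move=> w.
have h1 := @snd_cont ('rV[R]_n * 'rV[R]_m)%type 'rV[R]_nl w.
exact: (continuous_comp h1 (@coord_continuous R 1 nl ord0 j w.2)). Qed.
Lemma poly_cont (T : topologicalType) k (phi : T -> 'rV[R]_k) P :
  (forall i, continuous (fun t => phi t ord0 i)) -> poly_fun P ->
  continuous (fun t => P (phi t)).
Proof.
move=> Hc; elim => [a|i|p q _ Hp _ Hq|p q _ Hp _ Hq].
- move=> t; exact: cvg_cst.
- exact: Hc.
- move=> t; exact: cvgD (Hp t) (Hq t).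
- move=> t; exact: cvgM (Hp t) (Hq t).
Qed.
Lemma cont_rowmx (T' : topologicalType) p q (a : T' -> 'rV[R]_p) (b : T' -> 'rV[R]_q) :
  (forall i, continuous (fun t => a t ord0 i)) ->
  (forall i, continuous (fun t => b t ord0 i)) ->
  forall i, continuous (fun t => row_mx (a t) (b t) ord0 i).
Proof.
move=> ha hb i; rewrite -[i](@fintype.splitK p q); case: (fintype.split i) => j /=.
- have -> : (fun t => row_mx (a t) (b t) ord0 (lshift q j)) = (fun t => a t ord0 j).
    by apply: funext => t; rewrite row_mxEl.
  exact: ha.
- have -> : (fun t => row_mx (a t) (b t) ord0 (rshift p j)) = (fun t => b t ord0 j).
    by apply: funext => t; rewrite row_mxEr.
  exact: hb.
Qed.

Lemma cont3 l (F : 'rV[R]_n -> 'rV[R]_m -> 'rV[R]_nl -> 'rV[R]_l) :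
  poly_map3 F -> forall j, continuous (fun w : T => F w.1.1 w.1.2 w.2 ord0 j).
Proof.
move=> HF j.
have hc := cont_rowmx (cont_rowmx c11 c12) c2.
have H := poly_cont hc (HF j).
have E : (fun w : T => (fun z : 'rV[R]_(n + m + nl) =>
     F (lsubmx (lsubmx z)) (rsubmx (lsubmx z)) (rsubmx z) ord0 j)
     (row_mx (row_mx w.1.1 w.1.2) w.2)) = (fun w : T => F w.1.1 w.1.2 w.2 ord0 j).
  by apply: funext => w /=; rewrite !row_mxKl !row_mxKr.
by rewrite -E.
Qed.

Lemma cont2 (F : 'rV[R]_n -> 'rV[R]_m -> 'rV[R]_n) :
  poly_map2 F -> forall j, continuous (fun w : T => F w.1.1 w.1.2 ord0 j).
Proof.
move=> HF j.
have hc := cont_rowmx c11 c12.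
have H := poly_cont hc (HF j).
have E : (fun w : T => (fun z : 'rV[R]_(n + m) =>
     F (lsubmx z) (rsubmx z) ord0 j)
     (row_mx w.1.1 w.1.2)) = (fun w : T => F w.1.1 w.1.2 ord0 j).
  by apply: funext => w /=; rewrite row_mxKl row_mxKr.
by rewrite -E.
Qed.

Lemma cluster_seq (z : nat -> T) (A : set T) : compact A -> (forall k, A (z k)) ->
  exists c, A c /\ cluster (z @ \oo) c.
Proof.
move=> cA zA.
have FA : (z @ \oo) A by exists 0%N => // k _; exact: zA.
have [c [Ac Cc]] := cA (z @ \oo) _ FA.
by exists c.
Qed.

Lemma Lcl (z : nat -> T) c (Phi : T -> R) (P : nat -> Prop) :
  cluster (z @ \oo) c -> {for c, continuous Phi} -> (\forall k \near \oo, P k) ->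
  forall e, 0 < e -> exists k, P k /\ `|Phi c - Phi (z k)| < e.
Proof.
move=> cl hc hP e e0.
have N1 : nbhs c [set w | `|Phi c - Phi w| < e].
  by move/cvgrPdist_lt : hc => /(_ e e0).
have F1 : (z @ \oo) (z @` [set k | P k]).
  by apply: filterS hP => k Pk; exists k.
have [w [[k Pk <-] H]] := cl _ _ F1 N1.
by exists k.
Qed.

Lemma cl_ge0 (z : nat -> T) c (Phi : T -> R) :
  cluster (z @ \oo) c -> {for c, continuous Phi} -> (forall k, 0 <= Phi (z k)) ->
  0 <= Phi c.
Proof.
move=> cl hc hz; rewrite leNgt; apply/negP => hlt.
have hT : \forall k \near \oo, True by exists 0%N.
have hp : 0 < - Phi c by rewrite oppr_gt0.
have [k [_ Hk]] := Lcl cl hc hT hp.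
have := hz k; move: Hk; rewrite ltr_norml; lra.
Qed.

Lemma small0 (a : R) : (forall e, 0 < e -> `|a| < e + e) -> a = 0.
Proof.
move=> H; apply/eqP; apply: contraT => hne.
have ha : 0 < `|a| by rewrite normr_gt0.
have := H (`|a| / 4) (divr_gt0 ha (ltr0n _ 4)); lra.
Qed.

Lemma cl_lim (z : nat -> T) c (Phi : T -> R) y :
  cluster (z @ \oo) c -> {for c, continuous Phi} ->
  (forall e, 0 < e -> \forall k \near \oo, `|y - Phi (z k)| < e) ->
  Phi c = y.
Proof.
move=> cl hc hz; apply/eqP; rewrite -subr_eq0; apply/eqP; apply: small0 => e e0.
have [k [Hk1 Hk2]] := Lcl cl hc (hz e e0) e0.
have := ler_normD (Phi c - Phi (z k)) (Phi (z k) - y).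
rewrite (distrC (Phi (z k))) addrA subrK; lra.
Qed.

Definition box k (M : R) : set 'rV[R]_k := [set v | forall i, `[- M, M]%classic (v ord0 i)].

Lemma box_compact k M : compact (@box k M).
Proof.
have := @rV_compact R k (fun=> `[- M, M]%classic).
by apply => _; exact: segment_compact.
Qed.

Lemma boxP k M (v : 'rV[R]_k) : (forall i, `|v ord0 i| <= M) -> box M v.
Proof. by move=> H i; rewrite /= in_itv /= -ler_norml. Qed.

Definition Box M : set T := @box n M `*` @box m M `*` @box nl M.

Lemma Box_compact M : compact (Box M).
Proof. by apply: compact_setX; [apply: compact_setX|]; apply: box_compact. Qed.

End S.

Section Main.
Variables (R : realType) (n m nl pg ph : nat).
Variables (f : 'rV[R]_n -> 'rV[R]_m -> 'rV[R]_n) (psi : 'rV[R]_n -> 'rV[R]_m)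
  (g : 'rV[R]_n -> 'rV[R]_m -> 'rV[R]_nl -> 'rV[R]_pg)
  (h : 'rV[R]_n -> 'rV[R]_m -> 'rV[R]_nl -> 'rV[R]_ph)
  (V : 'rV[R]_n * 'rV[R]_m * 'rV[R]_nl -> R).
Hypotheses (Hf : poly_map2 f) (Hg : poly_map3 g) (Hh : poly_map3 h)
  (Hpsi : forall (x : 'rV[R]_n) (u : 'rV[R]_m),
      u = psi x <-> exists lam : 'rV[R]_nl, feasible g h x u lam)
  (HV : continuous V)
  (Hdec : forall x u lam xp up lamp,
      xp = f x u -> feasible g h x u lam -> feasible g h xp up lamp ->
      V (xp, up, lamp) - V (x, u, lam) <= - (norm2 x ^+ 2) /\ 0 <= V (x, u, lam)).

Local Notation tr := (traj f psi).

Lemma ex_lam x : exists lam, feasible g h x (psi x) lam.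
Proof. by apply/Hpsi. Qed.

Lemma feas_psi x u lam : feasible g h x u lam -> u = psi x.
Proof. by move=> H; apply/Hpsi; exists lam. Qed.

Lemma core x0 lam0 k : feasible g h x0 (psi x0) lam0 ->
  forall j, (k <= j)%N -> forall lamj, feasible g h (tr x0 j.+1) (psi (tr x0 j.+1)) lamj ->
  norm2 (tr x0 k) ^+ 2 <= V (x0, psi x0, lam0) - V (tr x0 j.+1, psi (tr x0 j.+1), lamj).
Proof.
move=> F0.
suff S : forall j lamj, feasible g h (tr x0 j.+1) (psi (tr x0 j.+1)) lamj ->
  V (tr x0 j.+1, psi (tr x0 j.+1), lamj) <=
  V (x0, psi x0, lam0) - (if (k <= j)%N then norm2 (tr x0 k) ^+ 2 else 0).
  by move=> j kj lamj Fj; have := S j lamj Fj; rewrite kj; lra.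
elim=> [|j IH] lamj Fj.
  have [H _] := Hdec (erefl (tr x0 1)) F0 Fj.
  have := sqr_ge0 (norm2 x0).
  by case: k => [|k] /=; lra.
have [l' Fl'] := ex_lam (tr x0 j.+1).
have := IH l' Fl'.
have [H _] := Hdec (erefl (tr x0 j.+2)) Fl' Fj.
have := sqr_ge0 (norm2 (tr x0 j.+1)).
case: (ltngtP k j.+1) => hk.
- have hk' : (k <= j)%N by rewrite -ltnS.
  by rewrite hk'; lra.
- by rewrite leqNgt (ltn_trans (ltnSn j) hk) /=; lra.
- by rewrite hk ltnn; lra.
Qed.


Lemma attr : globally_attractive f psi.
Proof.
move=> x0.
case: (choice ex_lam) => lf Hlf.
pose a k := V (tr x0 k, psi (tr x0 k), lf (tr x0 k)).
have Ha k : a k.+1 - a k <= - norm2 (tr x0 k) ^+ 2 /\ 0 <= a k.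
  exact: (Hdec (erefl (tr x0 k.+1)) (Hlf _) (Hlf _)).
have Hdecr : {homo a : i j / (i <= j)%N >-> j <= i}.
  move=> i j /subnK <-; elim: (j - i)%N => // d IH.
  rewrite addSn; have [H1 _] := Ha (d + i)%N.
  have := sqr_ge0 (norm2 (tr x0 (d + i))); lra.
have Hlb : has_lbound (range a).
  by exists 0 => _ [k _ <-]; have [_ ?] := Ha k.
have Hc := nonincreasing_cvgn Hdecr Hlb.
have HcS : (fun k => a k.+1) @ \oo --> inf (range a).
  by rewrite (cvg_shiftS a).
have Hd : (fun k => a k - a k.+1) @ \oo --> (0 : R).
  by rewrite -(subrr (inf (range a))); apply: cvgB.
apply/cvgrPdist_lt => e e0.
move: Hd => /cvgrPdist_lt /(_ (e ^+ 2) (exprn_gt0 2 e0)).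
apply: filterS => k /= Hk.
rewrite sub0r normrN.
have [H1 _] := Ha k.
have H2 := mxnorm_le_norm2 (tr x0 k).
have H3 := norm2_ge0 (tr x0 k).
have H4 := normr_ge0 (tr x0 k).
move: Hk; rewrite sub0r normrN => Hk.
have H5 := ler_norm (a k - a k.+1).
nra.
Qed.


Lemma near0 (P : 'rV[R]_n -> Prop) : (\forall x \near (0 : 'rV[R]_n), P x) ->
  exists2 d : R, 0 < d & forall x, `|x| < d -> P x.
Proof.
move/nbhs_ballP => [d d0 H]; exists d => // x hx; apply: H.
by rewrite -ball_normE /= sub0r normrN.
Qed.

Lemma lyap_final (sel : 'rV[R]_n -> 'rV[R]_nl) c0 :
  (forall x, feasible g h x (psi x) (sel x)) ->
  (forall e, 0 < e -> exists2 d, 0 < d &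
     forall x, `|x| < d -> `|V (x, psi x, sel x) - c0| < e) ->
  lyapunov_stable f psi.
Proof.
move=> Hs Hc eps eps0.
have e0 : 0 < eps ^+ 2 / 2 by rewrite divr_gt0 // exprn_gt0.
have [d d0 Hd] := Hc _ e0.
exists (d / 2); first by rewrite divr_gt0.
move=> x0 hx0 k.
have hx0' : `|x0| < d by have := mxnorm_le_norm2 x0; lra.
have H1 : \forall N \near \oo, `|0 - tr x0 N| < d.
  by move: (attr x0) => /cvgrPdist_lt /(_ d d0).
have H2 := nbhs_infty_gt k.
have [N [HN HkN]] := filter_ex (filterI H1 H2).
case: N HN HkN => // j HN HkN.
have HkN' : (k <= j)%N by [].
have C := @core x0 (sel x0) k (Hs x0) j HkN' _ (Hs (tr x0 j.+1)).
have A1 := Hd x0 hx0'.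
move: HN; rewrite sub0r normrN => HN.
have A2 := Hd _ HN.
move: A1 A2; rewrite !ltr_norml => A1 A2.
have := norm2_ge0 (tr x0 k).
nra.
Qed.


Lemma caseb : (forall x u lam u' lam', V (x, u, lam) = V (x, u', lam')) ->
  lyapunov_stable f psi.
Proof.
move=> Hind; case: (choice ex_lam) => lf Hlf.
apply: (@lyap_final lf (V (0, 0, 0)) Hlf) => e e0.
have Hc : (fun x : 'rV[R]_n => V (x, 0, 0)) @ (0 : 'rV[R]_n) --> V (0, 0, 0).
  have Hp : (fun x : 'rV[R]_n => (x, (0 : 'rV[R]_m), (0 : 'rV[R]_nl))) @ (0 : 'rV[R]_n)
     --> ((0 : 'rV[R]_n), (0 : 'rV[R]_m), (0 : 'rV[R]_nl)).
    have c1 : (fun x : 'rV[R]_n => x) @ (0 : 'rV[R]_n) --> (0 : 'rV[R]_n) by exact: cvg_id.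
    have c2 : (fun x : 'rV[R]_n => (0 : 'rV[R]_m)) @ (0 : 'rV[R]_n) --> (0 : 'rV[R]_m)  by apply: cvg_cst; exact: (nbhs_filter (0 : 'rV[R]_n)).
    have c3 : (fun x : 'rV[R]_n => (0 : 'rV[R]_nl)) @ (0 : 'rV[R]_n) --> (0 : 'rV[R]_nl) by apply: cvg_cst; exact: (nbhs_filter (0 : 'rV[R]_n)).
    exact: (cvg_pair (cvg_pair c1 c2) c3).
  have HV0 : V @ ((0 : 'rV[R]_n), (0 : 'rV[R]_m), (0 : 'rV[R]_nl))
     --> V ((0 : 'rV[R]_n), (0 : 'rV[R]_m), (0 : 'rV[R]_nl)) by apply: HV.
  exact: (cvg_comp _ _ Hp HV0).
move: Hc => /cvgrPdist_lt /(_ e e0) /near0 [d d0 Hd].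
exists d => // x hx; rewrite (Hind x (psi x) (lf x) 0 0) distrC; exact: Hd.
Qed.


Local Notation TT := (T R n m nl).

Lemma Hfeas (z : nat -> TT) c : cluster (z @ \oo) c ->
  (forall k, feasible g h (z k).1.1 (z k).1.2 (z k).2) -> feasible g h c.1.1 c.1.2 c.2.
Proof.
move=> cl Fz; split.
- move=> i; apply: (@cl_ge0 R n m nl z c (fun w : TT => g w.1.1 w.1.2 w.2 ord0 i) cl).
    exact: cont3.
  by move=> k; exact: (Fz k).1.
- apply/rowP => i; rewrite mxE.
  apply: (@cl_lim R n m nl z c (fun w : TT => h w.1.1 w.1.2 w.2 ord0 i) 0 cl).
    exact: cont3.
  move=> e e0; exists 0%N => // k _ /=.
  by rewrite (Fz k).2 mxE subrr normr0.
Qed.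

Lemma Hx0 (z : nat -> TT) c : cluster (z @ \oo) c ->
  (forall e, 0 < e -> \forall k \near \oo, `|(z k).1.1| < e) -> c.1.1 = 0.
Proof.
move=> cl Hz; apply/rowP => i; rewrite mxE.
apply: (@cl_lim R n m nl z c (fun w : TT => w.1.1 ord0 i) 0 cl); first exact: c11.
move=> e e0; apply: filterS (Hz e e0) => k hk /=; rewrite sub0r normrN.
exact: le_lt_trans (coord_le_mxnorm _ _) hk.
Qed.


Lemma casea : (exists B : R, \forall x \near (0 : 'rV[R]_n), `|min_cost g h x| <= B) ->
  lyapunov_stable f psi.
Proof.
move=> [B HB].
have [r r0 Hr] := near0 HB.
have hB0 : 0 <= B.
  have := Hr 0; rewrite normr0 => /(_ r0); apply: le_trans; exact: normr_ge0.
have Hsel : forall x, exists lam, feasible g h x (psi x) lam /\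
    (`|x| < r -> norm2 (psi x) + norm2 lam <= B + 1).
  move=> x; have [lam0 F0] := ex_lam x.
  have [hx|hx] := pselect (`|x| < r); last by exists lam0.
  pose S := [set c : R | exists u lam, feasible g h x u lam /\ c = norm2 u + norm2 lam].
  have S0 : S !=set0 by exists (norm2 (psi x) + norm2 lam0), (psi x), lam0.
  have Hi : inf S < B + 1.
    have := Hr x hx; rewrite /min_cost -/S => H.
    have := ler_norm (inf S); lra.
  have [y [u [lam [Fl ->]]] hy] := inf_lt S0 Hi.
  have Eu := feas_psi Fl; rewrite Eu in Fl hy.
  by exists lam; split => // _; apply: ltW.
case: (choice Hsel) => lb Hlb.
pose M := r + (B + 1).
have inBox : forall x, `|x| < r -> Box M ((x, psi x, lb x) : TT).
  move=> x hx; have [F H] := Hlb x; have Hb := H hx.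
  have h1 := norm2_ge0 (psi x); have h2 := norm2_ge0 (lb x).
  split; [split|]; apply: boxP => i /=.
  - by have := coord_le_mxnorm x i; rewrite /M; lra.
  - by have := coord_le_norm2 (psi x) i; rewrite /M; lra.
  - by have := coord_le_norm2 (lb x) i; rewrite /M; lra.
have p0 : f 0 (psi 0) = 0.
  have Hy := attr 0.
  have Hyk : forall e, 0 < e -> \forall k \near \oo, `|tr 0 k| < e.
    move=> e e0; move: Hy => /cvgrPdist_lt /(_ e e0).
    by apply: filterS => k; rewrite sub0r normrN.
  have [K0 _ HK0] := Hyk r r0.
  pose z k : TT := (tr 0 (k + K0), psi (tr 0 (k + K0)), lb (tr 0 (k + K0))).
  have zB : forall k, Box M (z k).
    by move=> k; apply: inBox; apply: HK0; rewrite /= leq_addl.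
  have [c [_ cl]] := cluster_seq (@Box_compact R n m nl M) zB.
  have c1 : c.1.1 = 0.
    apply: (Hx0 cl) => e e0; have [N _ HN] := Hyk e e0.
    by exists N => // k hk; apply: HN; exact: leq_trans hk (leq_addr K0 k).
  have cF := Hfeas cl (fun k => (Hlb _).1).
  have c2 : c.1.2 = psi 0 by rewrite -c1; exact: feas_psi cF.
  apply/rowP => j; rewrite mxE.
  have := @cl_lim R n m nl z c (fun w : TT => f w.1.1 w.1.2 ord0 j) 0 cl (cont2 Hf (j:=j) (x:=c)).
  rewrite /= c1 c2; apply.
  move=> e e0; have [N _ HN] := Hyk e e0; exists N => // k hk /=.
  rewrite sub0r normrN.
  apply: le_lt_trans (coord_le_mxnorm (tr 0 (k + K0).+1) j) _.
  by apply: HN; rewrite /= (leq_trans hk) // (leq_trans (leq_addr K0 k)).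
pose c0 := V (0, psi 0, lb 0).
have Hconst : forall l, feasible g h 0 (psi 0) l -> V (0, psi 0, l) = c0.
  move=> l Fl.
  have [H1 _] := Hdec (esym p0) Fl (Hlb 0).1.
  have [H2 _] := Hdec (esym p0) (Hlb 0).1 Fl.
  have := sqr_ge0 (norm2 (0 : 'rV[R]_n)); rewrite /c0; lra.
apply: (@lyap_final lb c0 (fun x => (Hlb x).1)) => e e0.
apply: contrapT => Hn.
have Hj : forall j : nat, exists x, `|x| < Num.min (j.+1%:R^-1) r /\
    e <= `|V (x, psi x, lb x) - c0|.
  move=> j; apply: contrapT => Hno; apply: Hn; exists (Num.min (j.+1%:R^-1) r).
    by rewrite lt_min r0 invr_gt0 ltr0n.
  move=> x hx; rewrite ltNge; apply/negP => hle; apply: Hno; by exists x.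
case: (choice Hj) => xs Hxs.
pose z k : TT := (xs k, psi (xs k), lb (xs k)).
have zB : forall k, Box M (z k).
  move=> k; apply: inBox; have [+ _] := Hxs k; rewrite lt_min => /andP[]//.
have [c [_ cl]] := cluster_seq (@Box_compact R n m nl M) zB.
have c1 : c.1.1 = 0.
  apply: (Hx0 cl) => e' e'0.
  apply: filterS (near_infty_natSinv_lt (PosNum e'0)) => k hk /=.
  have [+ _] := Hxs k; rewrite lt_min => /andP[h1 _].
  exact: lt_trans h1 hk.
have cF := Hfeas cl (fun k => (Hlb _).1).
have c2 : c.1.2 = psi 0 by rewrite -c1; exact: feas_psi cF.
have Vc : V c = c0.
  move: c1 c2 cF; case: c {cl} => [[a b] l] /= -> -> Fl.
  by apply: Hconst.
have HVc : V @ c --> V c by apply: HV.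
have Hc0 : (fun w : TT => c0) @ c --> c0 by apply: cvg_cst; exact: (nbhs_filter c).
have He : (fun w : TT => e) @ c --> e by apply: cvg_cst; exact: (nbhs_filter c).
have H1 : (fun w : TT => V w - c0) @ c --> V c - c0 := @cvgB _ _ _ _ (nbhs_filter c) _ _ _ _ HVc Hc0.
have H2 : (fun w : TT => `|V w - c0|) @ c --> `|V c - c0| := @cvg_norm _ _ _ _ (nbhs_filter c) _ _ H1.
have Hcont : {for c, continuous (fun w : TT => `|V w - c0| - e)} := @cvgB _ _ _ _ (nbhs_filter c) _ _ _ _ H2 He.
have := @cl_ge0 R n m nl z c (fun w : TT => `|V w - c0| - e) cl Hcont.
have Hz : forall k, 0 <= `|V (z k) - c0| - e.
  by move=> k; rewrite subr_ge0; exact: (Hxs k).2.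
move=> /(_ Hz) /=; rewrite Vc subrr normr0; lra.
Qed.

End Main.

Unset Implicit Arguments. Set Strict Implicit.
Theorem theorem1 (R : realType) (n m nl pg ph : nat)
  (f : 'rV[R]_n -> 'rV[R]_m -> 'rV[R]_n)
  (psi : 'rV[R]_n -> 'rV[R]_m)
  (g : 'rV[R]_n -> 'rV[R]_m -> 'rV[R]_nl -> 'rV[R]_pg)
  (h : 'rV[R]_n -> 'rV[R]_m -> 'rV[R]_nl -> 'rV[R]_ph)
  (V : 'rV[R]_n * 'rV[R]_m * 'rV[R]_nl -> R) :
  poly_map2 f -> poly_map3 g -> poly_map3 h ->
  (forall (x : 'rV[R]_n) (u : 'rV[R]_m),
      u = psi x <-> exists lam : 'rV[R]_nl, feasible g h x u lam) ->
  continuous V ->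
  (forall x u lam xp up lamp,
      xp = f x u -> feasible g h x u lam -> feasible g h xp up lamp ->
      V (xp, up, lamp) - V (x, u, lam) <= - (norm2 x ^+ 2) /\ 0 <= V (x, u, lam)) ->
  globally_attractive f psi /\
  ((exists B : R, \forall x \near (0 : 'rV[R]_n), `|min_cost g h x| <= B)
   \/ (forall x u lam u' lam', V (x, u, lam) = V (x, u', lam')) ->
   GAS f psi).
Proof.
move=> Hf Hg Hh Hpsi HV Hdec; split; first exact: (attr Hpsi Hdec).
move=> [Ha|Hb]; split.
- exact: (attr Hpsi Hdec).
- exact: (casea Hf Hg Hh Hpsi HV Hdec Ha).
- exact: (attr Hpsi Hdec).
- exact: (caseb Hpsi HV Hdec Hb).
Qed.
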